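(* For any distributions $P,Q,R$ and any $n\geq 1$, if $X_1,\dots,X_n$ are i.i.d. from $R$, then $$\mathrm{Var}\big(\mathrm{T}(P,Q,X^n)\big) \leq \frac{55}{n}\max\big(\mathrm{H}^2(P,R),\,\mathrm{H}^2(Q,R)\big).$$
   Context: Distributions $P,Q,R$ are probability distributions on a measurable space $\mathcal{X}$, identified with their densities with respect to a common $\sigma$-finite reference measure $\mu$ (e.g. Lebesgue measure, or counting measure in the discrete case). All integrals and norms are taken with respect to $\mu$, with $\|U\|_p = (\int |U|^p\, d\mu)^{1/p}$. The Hellinger distance is $\mathrm{H}(P,Q) = \frac{1}{\sqrt{2}}\|\sqrt{P}-\sqrt{Q}\|_2$. For a sample $X^n=(X_1,\dots,X_n)$, the test statistic is $$\mathrm{T}(P,Q,X^n) = \frac{1}{n}\sum_{i=1}^n \frac{P(X_i)-Q(X_i)}{P(X_i)+Q(X_i)},$$ where a summand is interpreted as $0$ whenever $P(X_i)+Q(X_i)=0$. *)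

(* Defs.v *)
From mathcomp Require Import all_boot all_order all_algebra.
From mathcomp Require Import all_classical all_reals all_analysis.
Set Implicit Arguments. Unset Strict Implicit. Unset Printing Implicit Defensive.
Import Order.TTheory GRing.Theory Num.Theory.
Local Open Scope classical_set_scope.
Local Open Scope ring_scope.

Section defs.
Context d (X : measurableType d) (R : realType).

Definition is_density (mu : {measure set X -> \bar R}) (f : X -> R) : Prop :=
  [/\ measurable_fun setT f, (forall x, 0 <= f x) &
      (\int[mu]_x (f x)%:E = 1)%E].

Definition hellinger2 (mu : {measure set X -> \bar R}) (P Q : X -> R) : \bar R :=
  ((2^-1)%:E * \int[mu]_x (((Num.sqrt (P x) - Num.sqrt (Q x)) ^+ 2)%:E))%E.

Definition test_summand (P Q : X -> R) (x : X) : R :=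
  if P x + Q x == 0 then 0 else (P x - Q x) / (P x + Q x).

Definition test_stat (n : nat) (P Q : X -> R) (xs : 'I_n -> X) : R :=
  n%:R^-1 * \sum_(i < n) test_summand P Q (xs i).

Definition iid_with_density dO (Omega : measurableType dO)
  (Pr : probability Omega R) (n : nat) (Xs : 'I_n -> Omega -> X)
  (mu : {measure set X -> \bar R}) (Rd : X -> R) : Prop :=
  [/\ (forall i, measurable_fun setT (Xs i)),
      (forall i (A : set X), measurable A ->
          Pr (Xs i @^-1` A) = (\int[mu]_(x in A) (Rd x)%:E)%E) &
      (forall (J : {set 'I_n}) (A : 'I_n -> set X),
          (forall i, measurable (A i)) ->
          Pr [set w | forall i, i \in J -> A i (Xs i w)] =
          (\prod_(i in J) Pr (Xs i @^-1` A i))%E)].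

End defs.

(* Main.v *)
Require Import Defs.
From HB Require Import structures.
From mathcomp Require Import all_boot all_order all_algebra.
From mathcomp Require Import all_classical all_reals all_analysis.
From mathcomp Require Import measurable_realfun.
Import Order.TTheory GRing.Theory Num.Theory.
Local Open Scope classical_set_scope.
Local Open Scope ring_scope.
Definition mk_mfun {dO d : measure_display} {Omega : measurableType dO} {X : measurableType d}
  {Y : Omega -> X} (mY : measurable_fun setT Y) : {mfun Omega >-> X} :=
  HB.pack Y (isMeasurableFun.Build _ _ _ _ _ mY).

Lemma prod_set2 (R : realType) (n : nat) (i j : 'I_n) (F : 'I_n -> \bar R) :
  i != j -> (\prod_(k in [set i; j]%SET) F k = F i * F j)%E.
Proof.
move=> ij. rewrite big_setU1 /= ?inE // big_set1 //.
Qed.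

Lemma indep_ge0 (R : realType) (d : measure_display) (X : measurableType d)
  (dO : measure_display) (Omega : measurableType dO) (Pr : probability Omega R)
  (n : nat) (Xs : 'I_n -> Omega -> X)
  (mXs : forall i, measurable_fun setT (Xs i))
  (ind : forall (J : {set 'I_n}) (A : 'I_n -> set X),
          (forall i, measurable (A i)) ->
          Pr [set w | forall i, i \in J -> A i (Xs i w)] =
          (\prod_(i in J) Pr (Xs i @^-1` A i))%E)
  (i j : 'I_n) (g h : X -> R) :
  i != j -> measurable_fun setT g -> measurable_fun setT h ->
  (forall x, 0 <= g x) -> (forall x, 0 <= h x) ->
  (\int[Pr]_w ((g (Xs i w) * h (Xs j w))%:E) =
   \int[Pr]_w (g (Xs i w))%:E * \int[Pr]_w (h (Xs j w))%:E)%E.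
Proof.
move=> ij mg mh g0 h0.
pose mi := distribution Pr (mk_mfun (mXs i)).
pose mj := distribution Pr (mk_mfun (mXs j)).
pose phi := fun w => (Xs i w, Xs j w).
have mphi : measurable_fun setT phi by apply: measurable_fun_pair.
have rect : forall A B, measurable A -> measurable B ->
    pushforward Pr phi (A `*` B) = (mi A * mj B)%E.
  move=> A B mA mB.
  pose Af := fun k : 'I_n => if k == i then A else if k == j then B else setT.
  have mAf : forall k, measurable (Af k).
    by move=> k; rewrite /Af; case: ifP => _ //; case: ifP.
  have := ind [set i; j]%SET Af mAf.
  have ji : j != i by rewrite eq_sym.
  rewrite prod_set2 // /Af eqxx (negbTE ji) eqxx.
  move=> <-; rewrite /pushforward; congr (Pr _).
  apply/seteqP; split => w /=.
    move=> [wA wB] k; rewrite !inE => /orP[]/eqP ->.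
      by rewrite eqxx.
    by rewrite (negbTE ji) eqxx.
  move=> H; split.
    by have := H i; rewrite !inE eqxx /= => /(_ isT).
  by have := H j; rewrite !inE eqxx orbT (negbTE ji) => /(_ isT).
have uniq := product_measure_unique (m1:=mi) (m2:=mj) (m':=pushforward Pr phi) rect.
have mF : measurable_fun [set: X * X] (EFin \o (fun z : X * X => g z.1 * h z.2)).
  apply/measurable_EFinP; apply: measurable_funM.
    exact: measurableT_comp mg measurable_fst.
  exact: measurableT_comp mh measurable_snd.
have F0 : forall z : X * X, (0 <= (g z.1 * h z.2)%:E)%E.
  by move=> z; rewrite lee_fin mulr_ge0.
transitivity (\int[pushforward Pr phi]_z ((g z.1 * h z.2)%:E))%E.
  by rewrite ge0_integral_pushforward // preimage_setT.
transitivity (\int[(mi \x mj)%E]_z ((g z.1 * h z.2)%:E))%E.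
  by apply: eq_measure_integral => A mA _; rewrite -(uniq mphi).
rewrite fubini_tonelli1 //.
rewrite /fubini_F /=.
transitivity (\int[mi]_x ((g x)%:E * \int[mj]_y (h y)%:E))%E.
  apply: eq_integral => x _.
  under eq_integral do rewrite EFinM.
  rewrite ge0_integralZl //; first exact/measurable_EFinP.
    by move=> y _; rewrite lee_fin.
  by rewrite lee_fin.
rewrite ge0_integralZr //; first last.
- by apply: integral_ge0 => y _; rewrite lee_fin.
- by move=> x _; rewrite lee_fin.
- exact/measurable_EFinP.
rewrite /mi /mj !ge0_integral_distribution //=; try (exact/measurable_EFinP);
  by move=> y; rewrite lee_fin.
Qed.
Import HBNNSimple.

Lemma dens_change (R : realType) (d : measure_display) (T : measurableType d)
  (nu mu : {measure set T -> \bar R}) (rho : T -> R) :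
  measurable_fun setT rho -> (forall x, 0 <= rho x) ->
  (forall A, measurable A -> nu A = (\int[mu]_(x in A) (rho x)%:E)%E) ->
  forall f : T -> \bar R, (forall x, (0 <= f x)%E) -> measurable_fun setT f ->
  (\int[mu]_x (f x * (rho x)%:E) = \int[nu]_x f x)%E.
Proof.
move=> mrho rho0 f_integral f f0 mf.
pose E := [set: T]. have mE : measurable E by exact: measurableT.
set g := fun x => (rho x)%:E.
have mg : measurable_fun E g by exact/measurable_EFinP.
have g0 : forall x, (0 <= g x)%E by move=> x; rewrite lee_fin.
pose h := nnsfun_approx mE mf.
have -> : (\int[nu]_(x in E) f x =
    lim (\int[nu]_(x in E) (EFin \o h n) x @[n --> \oo]))%E.
  have fE x : E x -> f x = lim ((EFin \o h n) x @[n --> \oo]).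
    by move=> Ex; apply/esym/cvg_lim => //; exact: cvg_nnsfun_approx.
  under eq_integral => x /[!inE] /fE -> //.
  apply: monotone_convergence => //.
  - move=> n; apply/measurable_EFinP.
    by apply: (measurable_funS measurableT) => //; exact/measurable_funP.
  - by move=> n x Ex //=; rewrite lee_fin.
  - by move=> x Ex a b ab; rewrite lee_fin; exact/lefP/nd_nnsfun_approx.
have -> : (\int[mu]_(x in E) (f x * g x) =
    lim (\int[mu]_(x in E) ((EFin \o h n) x * g x) @[n --> \oo]))%E.
  have fg x : E x -> (f x * g x = lim (((EFin \o h n) \* g) x @[n --> \oo]))%E.
    by move=> Ex; apply/esym/cvg_lim => //; apply: cvgeZr;
      [by []|exact: cvg_nnsfun_approx].
  under eq_integral => x /[!inE] /fg -> //.
  apply: monotone_convergence => [//| | |].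
  - move=> n; apply/emeasurable_funM => //; apply/measurable_funTS.
    exact/measurable_EFinP.
  - by move=> n x Ex /=; rewrite mule_ge0 ?lee_fin.
  - by move=> x Ex a b ab/=; rewrite lee_wpmul2r ?lee_fin//; exact/lefP/nd_nnsfun_approx.
suff suf n : (\int[mu]_(x in E) ((EFin \o h n) x * g x) =
    \int[nu]_(x in E) (EFin \o h n) x)%E.
  by under eq_fun do rewrite suf.
transitivity (\int[nu]_(x in E)
   (\sum_(y \in range (h n)) (y * \1_(h n @^-1` [set y]) x)%:E))%E; last first.
  by apply: eq_integral => t tE; rewrite /= fimfunE -fsumEFin.
have indich m r : measurable_fun E (fun x => (r * \1_(h m @^-1` [set r]) x)%:E).
  by apply: (measurable_comp measurableT) => //; exact: measurable_funM.
rewrite ge0_integral_fsum//; last by move=> m y Ey; exact: nnfun_muleindic_ge0.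
transitivity (\int[mu]_(x in E) (\sum_(y \in range (h n))
    (y * \1_(h n @^-1` [set y]) x)%:E * g x))%E.
  under [RHS]eq_integral => x xE.
    rewrite -ge0_mule_fsuml => [|y]; last exact: nnfun_muleindic_ge0.
    rewrite fsumEFin // -(fimfunE _ x); over.
  by [].
rewrite ge0_integral_fsum//; last 2 first.
  - by move=> y; apply: emeasurable_funM => //.
  - by move=> m y Ey; rewrite mule_ge0 ?lee_fin//; exact: nnfun_muleindic_ge0.
apply: eq_fsbigr => r rhn.
under [RHS]eq_integral do rewrite EFinM.
rewrite integralZl_indic_nnsfun => //.
under eq_integral do rewrite EFinM -muleA.
rewrite ge0_integralZl//.
- under eq_integral do rewrite muleC.
  rewrite (eq_integral (g \_ (h n @^-1` [set r]))); last first.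
    by move=> x xE; rewrite epatch_indic.
  by rewrite -integral_mkcondr -f_integral// integral_indic// setIC.
- by apply: emeasurable_funM => //; exact/measurable_EFinP.
- by move=> t Et; rewrite mule_ge0 ?lee_fin.
- by move: rhn; rewrite inE => -[t _ <-]; rewrite lee_fin.
Qed.
From mathcomp Require Import ring lra.
Lemma pt_ineq (R : realType) (p q r : R) : 0 <= p -> 0 <= q -> 0 <= r ->
  (if p^+2 + q^+2 == 0 then 0 else (p^+2 - q^+2) / (p^+2 + q^+2)) ^+ 2 * r ^+ 2
  <= 12 * ((p - r) ^+ 2 + (q - r) ^+ 2).
Proof.
move=> p0 q0 r0.
case: ifPn => [_|s0]; first by rewrite expr0n /= mul0r; apply: mulr_ge0 => //; apply: addr_ge0; apply: sqr_ge0.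
set s := p^+2 + q^+2.
have sp : 0 < s by rewrite lt_def s0 /s addr_ge0 ?sqr_ge0.
set F := (p^+2 - q^+2) / s.
have hF : F * s = p^+2 - q^+2 by rewrite /F mulfVK // gt_eqF.
have F2 : F ^+ 2 <= 1.
  have : (F * s) ^+ 2 <= s ^+ 2 by rewrite hF /s; nra.
  rewrite exprMn => H.
  have s2 : 0 < s ^+ 2 by rewrite exprn_gt0.
  by rewrite -(ler_pM2r s2) mul1r.
have [rs|rs] := leP (r ^+ 2) (3 * s).
- (* r^2 F^2 s^2 = r^2 (p-q)^2 (p+q)^2 <= 3 s (p-q)^2 2 s *)
  have key : (F ^+ 2 * r ^+ 2) * s ^+ 2 <= (6 * (p - q) ^+ 2) * s ^+ 2.
    have -> : (F ^+ 2 * r ^+ 2) * s ^+ 2 = r ^+ 2 * (F * s) ^+ 2 by ring.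
    rewrite hF.
    have -> : (p ^+ 2 - q ^+ 2) ^+ 2 = (p - q) ^+ 2 * (p + q) ^+ 2 by ring.
    have pq2 : (p + q) ^+ 2 <= 2 * s by rewrite /s; nra.
    have a0 : 0 <= (p - q) ^+ 2 by apply: sqr_ge0.
    have : r ^+ 2 * ((p - q) ^+ 2 * (p + q) ^+ 2) <= (3 * s) * ((p - q) ^+ 2 * (2 * s)).
      apply: ler_pM => //; first by apply: sqr_ge0.
        by apply: mulr_ge0 => //; apply: sqr_ge0.
      by apply: ler_wpM2l.
    by move=> H; apply: (le_trans H); rewrite le_eqVlt; apply/orP; left; apply/eqP; ring.
  have s2 : 0 < s ^+ 2 by rewrite exprn_gt0.
  move: key; rewrite (ler_pM2r s2) => key.
  apply: (le_trans key).
  have h0 : 0 <= (p + q - 2 * r) ^+ 2 by apply: sqr_ge0.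
  have -> : 12 * ((p - r) ^+ 2 + (q - r) ^+ 2) = 6 * (p - q) ^+ 2 + 6 * (p + q - 2 * r) ^+ 2 by ring.
  by rewrite lerDl; apply: mulr_ge0.
- have h1 : 0 <= (2 * p - r) ^+ 2 by apply: sqr_ge0.
  have h2 : 0 <= (2 * q - r) ^+ 2 by apply: sqr_ge0.
  have : r ^+ 2 <= 3%:R / 2%:R * ((p - r) ^+ 2 + (q - r) ^+ 2) by rewrite /s in rs; nra.
  move=> H.
  have : F ^+ 2 * r ^+ 2 <= r ^+ 2 by rewrite -[X in _ <= X]mul1r; apply: ler_wpM2r => //; apply: sqr_ge0.
  move=> H2; apply: (le_trans H2); apply: (le_trans H).
  apply: ler_wpM2r; first by apply: addr_ge0; apply: sqr_ge0.
  lra.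
Qed.
Definition nice {dO : measure_display} {Omega : measurableType dO} {R : realType}
  (h : Omega -> R) := measurable_fun setT h /\ exists M : R, forall w, `|h w| <= M.

Section nice.
Context {R : realType} {dO : measure_display} {Omega : measurableType dO}
  (Pr : probability Omega R).

Lemma nice_int {h : Omega -> R} : nice h -> Pr.-integrable setT (EFin \o h).
Proof.
move=> [mh [M hM]].
apply: (@le_integrable _ _ _ Pr setT measurableT _ (EFin \o cst M)).
- exact/measurable_EFinP.
- move=> x _ /=; rewrite lee_fin (ger0_norm (le_trans (normr_ge0 _) (hM x))).
  exact: hM.
- exact: finite_measure_integrable_cst.
Qed.

Lemma niceE {h : Omega -> R} : nice h ->
  (\int[Pr]_w (h w)%:E)%E = (Rintegral Pr setT h)%:E.
Proof. by move=> nh; rewrite /Rintegral fineK // integrable_fin_num // nice_int. Qed.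

Lemma nice_cst (k : R) : nice (fun _ : Omega => k).
Proof. by split; [exact: measurable_cst | exists `|k|]. Qed.

Lemma niceD {h1 h2 : Omega -> R} : nice h1 -> nice h2 -> nice (fun w => h1 w + h2 w).
Proof.
move=> [m1 [M1 H1]] [m2 [M2 H2]]; split; first exact: measurable_funD.
by exists (M1 + M2) => w; apply: (le_trans (ler_normD _ _)); apply: lerD.
Qed.

Lemma niceM {h1 h2 : Omega -> R} : nice h1 -> nice h2 -> nice (fun w => h1 w * h2 w).
Proof.
move=> [m1 [M1 H1]] [m2 [M2 H2]]; split; first exact: measurable_funM.
exists (M1 * M2) => w; rewrite normrM; apply: ler_pM => //.
Qed.

Lemma niceZ (k : R) {h : Omega -> R} : nice h -> nice (fun w => k * h w).
Proof. by move=> nh; apply: niceM => //; exact: nice_cst. Qed.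

Lemma niceB {h1 h2 : Omega -> R} : nice h1 -> nice h2 -> nice (fun w => h1 w - h2 w).
Proof.
move=> n1 n2; have := niceD n1 (niceZ (-1) n2).
by congr nice; apply/funext => w; rewrite mulN1r.
Qed.

Lemma nice_sum (n : nat) (F : 'I_n -> Omega -> R) : (forall i, nice (F i)) ->
  nice (fun w => \sum_(i < n) F i w).
Proof.
move=> nF; elim: n F nF => [|n IH] F nF.
  by under eq_fun do rewrite big_ord0; exact: nice_cst.
under eq_fun do rewrite big_ord_recr /=.
apply: niceD => //; exact: IH.
Qed.

Lemma RintD {h1 h2 : Omega -> R} : nice h1 -> nice h2 ->
  Rintegral Pr setT (fun w => h1 w + h2 w) = Rintegral Pr setT h1 + Rintegral Pr setT h2.
Proof. by move=> n1 n2; rewrite RintegralD //; exact: nice_int. Qed.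

Lemma RintB {h1 h2 : Omega -> R} : nice h1 -> nice h2 ->
  Rintegral Pr setT (fun w => h1 w - h2 w) = Rintegral Pr setT h1 - Rintegral Pr setT h2.
Proof. by move=> n1 n2; rewrite RintegralB //; exact: nice_int. Qed.

Lemma RintZ (k : R) {h : Omega -> R} : nice h ->
  Rintegral Pr setT (fun w => k * h w) = k * Rintegral Pr setT h.
Proof. by move=> n1; rewrite RintegralZl //; exact: nice_int. Qed.

Lemma Rint_cst (k : R) : Rintegral Pr setT (fun _ => k) = k.
Proof. rewrite Rintegral_cst //. have H1 := @probability_setT _ _ _ Pr. rewrite /= in H1 *. by rewrite H1 mulr1. Qed.

Unset Printing All.
Lemma Rint_le {h1 h2 : Omega -> R} : nice h1 -> nice h2 -> (forall w, h1 w <= h2 w) ->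
  Rintegral Pr setT h1 <= Rintegral Pr setT h2.
Proof. by move=> n1 n2 h12; apply: le_Rintegral => //; exact: nice_int. Qed.

Lemma Rint_sum (n : nat) (F : 'I_n -> Omega -> R) : (forall i, nice (F i)) ->
  Rintegral Pr setT (fun w => \sum_(i < n) F i w) = \sum_(i < n) Rintegral Pr setT (F i).
Proof.
elim: n F => [|n IH] F nF.
  by under eq_Rintegral do rewrite big_ord0; rewrite big_ord0 Rint_cst.
under eq_Rintegral do rewrite big_ord_recr /=.
rewrite RintD; last exact: nF.
  by rewrite IH ?big_ord_recr //.
exact: nice_sum.
Qed.
End nice.
Section musect.
Context {R : realType} {d : measure_display} {X : measurableType d}.

Lemma ts_eq (P Q : X -> R) : (forall x, 0 <= P x) -> (forall x, 0 <= Q x) ->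
  test_summand P Q = fun x => (P x - Q x) * (P x + Q x) `^ (-1).
Proof.
move=> P0 Q0; apply/funext => x; rewrite /test_summand.
case: ifPn => [/eqP ->|_]; first by rewrite powR0 ?mulr0 // oppr_eq0 oner_eq0.
by rewrite powR_inv1 // addr_ge0.
Qed.

Lemma ts_meas (P Q : X -> R) : (forall x, 0 <= P x) -> (forall x, 0 <= Q x) ->
  measurable_fun setT P -> measurable_fun setT Q ->
  measurable_fun setT (test_summand P Q).
Proof.
move=> P0 Q0 mP mQ; rewrite ts_eq //.
apply: (measurable_funM (f := fun x => P x - Q x) (g := fun x => (P x + Q x) `^ (-1))).
  exact: measurable_funB.
apply: (measurableT_comp (f := fun y => y `^ (-1)) (g := fun x => P x + Q x)).
  exact: measurable_powR.
exact: measurable_funD.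
Qed.

Lemma ts_bound (P Q : X -> R) : (forall x, 0 <= P x) -> (forall x, 0 <= Q x) ->
  forall x, `|test_summand P Q x| <= 1.
Proof.
move=> P0 Q0 x; rewrite /test_summand.
case: ifPn => [_|s0]; first by rewrite normr0.
have sp : 0 < P x + Q x by rewrite lt_def s0 addr_ge0.
rewrite normrM normfV (gtr0_norm sp) ler_pdivrMr // mul1r.
have := P0 x; have := Q0 x.
rewrite ler_norml => ? ?; apply/andP; split; lra.
Qed.

Lemma hell_bound (mu : {measure set X -> \bar R}) (P Q Rd : X -> R) :
  (forall x, 0 <= P x) -> (forall x, 0 <= Q x) -> (forall x, 0 <= Rd x) ->
  measurable_fun setT P -> measurable_fun setT Q -> measurable_fun setT Rd ->
  (\int[mu]_x ((test_summand P Q x ^+ 2 * Rd x)%:E) <=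
   12%:E * (\int[mu]_x (((Num.sqrt (P x) - Num.sqrt (Rd x)) ^+ 2)%:E) +
            \int[mu]_x (((Num.sqrt (Q x) - Num.sqrt (Rd x)) ^+ 2)%:E)))%E.
Proof.
move=> P0 Q0 R0 mP mQ mR.
have msq : measurable_fun setT (@Num.sqrt R).
  by apply: continuous_measurable_fun; exact: sqrt_continuous.
have mA : forall U : X -> R, measurable_fun setT U ->
    measurable_fun setT (fun x => (Num.sqrt (U x) - Num.sqrt (Rd x)) ^+ 2).
  move=> U mU; apply: measurable_funX; apply: measurable_funB.
    exact: measurableT_comp msq mU.
  exact: measurableT_comp msq mR.
rewrite -ge0_integralD //; first last.
- exact/measurable_EFinP/mA.
- by move=> x _; rewrite lee_fin sqr_ge0.
- exact/measurable_EFinP/mA.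
- by move=> x _; rewrite lee_fin sqr_ge0.
rewrite -ge0_integralZl_EFin //; first last.
- by apply: emeasurable_funD; exact/measurable_EFinP/mA.
- by move=> x _; rewrite adde_ge0 // lee_fin sqr_ge0.
apply: ge0_le_integral => //.
- by move=> x _; rewrite lee_fin mulr_ge0 // sqr_ge0.
- apply/measurable_EFinP; apply: measurable_funM => //.
  by apply: measurable_funX; exact: ts_meas.
- apply: emeasurable_funM => //; apply: emeasurable_funD; exact/measurable_EFinP/mA.
move=> x _; rewrite -EFinD -EFinM lee_fin.
have := @pt_ineq R (Num.sqrt (P x)) (Num.sqrt (Q x)) (Num.sqrt (Rd x)) (sqrtr_ge0 _) (sqrtr_ge0 _) (sqrtr_ge0 _).
by rewrite !sqr_sqrtr.
Qed.
End musect.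
From mathcomp Require Import ring lra.
Lemma final_ineq (R : realType) (n : nat) (k S : R) (Ia Ib : \bar R) :
  (0 < n)%N -> S <= n%:R * k -> (0 <= Ia)%E -> (0 <= Ib)%E ->
  (k%:E <= 12%:E * (Ia + Ib))%E ->
  ((n%:R^-1 / n%:R * S)%:E <=
    (55 / n%:R)%:E * maxe ((2^-1)%:E * Ia) ((2^-1)%:E * Ib))%E.
Proof.
move=> n0 Sk Ia0 Ib0 kI.
have np : 0 < n%:R :> R by rewrite ltr0n.
have c0 : (0 < (55 / n%:R)%:E :> \bar R)%E by rewrite lte_fin divr_gt0.
have h0 : (0 < (2^-1)%:E :> \bar R)%E by rewrite lte_fin invr_gt0.
case: Ia Ia0 kI => [a| |] // Ia0 kI; last first.
  by rewrite gt0_muley // maxye gt0_muley // leey.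
case: Ib Ib0 kI => [b| |] // Ib0 kI; last first.
  by rewrite gt0_muley // maxey gt0_muley // leey.
rewrite -!EFinM -EFin_max -EFinM lee_fin.
move: kI; rewrite -EFinD -EFinM lee_fin => kI.
move: Ia0 Ib0; rewrite !lee_fin => a0 b0.
set M := Num.max _ _.
have Ma : 2^-1 * a <= M by rewrite le_max lexx.
have Mb : 2^-1 * b <= M by rewrite le_max lexx orbT.
have kM : k <= 55 * M by lra.
have ni0 : 0 < n%:R^-1 :> R by rewrite invr_gt0.
have nni : n%:R * n%:R^-1 = 1 :> R by rewrite mulfV // gt_eqF.
have -> : n%:R^-1 / n%:R * S = n%:R^-1 * (n%:R^-1 * S) by ring.
apply: (le_trans (y := n%:R^-1 * (n%:R^-1 * (n%:R * k)))).
  apply: ler_wpM2l; first exact: ltW.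
  apply: ler_wpM2l; first exact: ltW.
  exact: Sk.
have -> : n%:R^-1 * (n%:R^-1 * (n%:R * k)) = n%:R^-1 * k * (n%:R * n%:R^-1) by ring.
rewrite nni mulr1.
have -> : 55 / n%:R * M = n%:R^-1 * (55 * M) by ring.
by rewrite ler_wpM2l // ltW.
Qed.
Theorem lemma3 (R : realType) (d : measure_display) (X : measurableType d)
  (mu : {measure set X -> \bar R}) (P Q Rd : X -> R)
  (dO : measure_display) (Omega : measurableType dO) (Pr : probability Omega R)
  (n : nat) (Xs : 'I_n -> Omega -> X) :
  sigma_finite setT mu ->
  is_density mu P -> is_density mu Q -> is_density mu Rd ->
  (0 < n)%N ->
  iid_with_density Pr Xs mu Rd ->
  ('V_Pr[fun w => test_stat P Q (fun i => Xs i w)] <=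
     (55 / n%:R)%:E * maxe (hellinger2 mu P Rd) (hellinger2 mu Q Rd))%E.
Proof.
move=> _ [mP P0 _] [mQ Q0 _] [mRd Rd0 _] n0 [mXs lawX ind].
pose f := test_summand P Q.
have mf : measurable_fun setT f by exact: ts_meas.
have fb : forall x, `|f x| <= 1 by exact: ts_bound.
pose Y := fun (i : 'I_n) w => f (Xs i w).
have nY : forall i, nice (Y i).
  by move=> i; split; [exact: measurableT_comp mf (mXs i) | exists 1 => w; exact: fb].
pose m := fun i => Rintegral Pr setT (Y i).
have cross : forall i j, i != j -> Rintegral Pr setT (fun w => Y i w * Y j w) = m i * m j.
  move=> i j ij.
  have g0 : forall x, 0 <= f x + 1.
    by move=> x; have := fb x; rewrite ler_norml => /andP[? ?]; lra.
  have mg : measurable_fun setT (fun x => f x + 1).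
    by apply: measurable_funD => //; exact: measurable_cst.
  have := @indep_ge0 R d X dO Omega Pr n Xs mXs ind i j _ _ ij mg mg g0 g0.
  have nA : forall k, nice (fun w => f (Xs k w) + 1).
    by move=> k; apply: niceD; [exact: (nY k) | exact: nice_cst].
  rewrite (niceE Pr (niceM (nA i) (nA j))) !(niceE Pr (nA _)) -EFinM => H0.
  have {H0} := EFin_inj H0.
  rewrite !RintD ?Rint_cst //; try (exact: nice_cst); try (exact: nY).
  have -> : (fun w => (f (Xs i w) + 1) * (f (Xs j w) + 1)) =
     (fun w => (Y i w * Y j w + Y i w) + (Y j w + 1)).
    by apply/funext => w; rewrite /Y; ring.
  have nYY := niceM (nY i) (nY j).
  rewrite (RintD Pr (niceD nYY (nY i)) (niceD (nY j) (nice_cst 1))).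
  rewrite (RintD Pr nYY (nY i)) (RintD Pr (nY j) (nice_cst 1)) Rint_cst.
  rewrite /m /Y => H; lra.
pose K := (\int[mu]_x (((f x * f x) * Rd x)%:E))%E.
have diagE : forall i, (Rintegral Pr setT (fun w => Y i w * Y i w))%:E = K.
  move=> i; rewrite -(niceE Pr (niceM (nY i) (nY i))).
  have hdist : forall A, measurable A ->
      distribution Pr (mk_mfun (mXs i)) A = (\int[mu]_(x in A) (Rd x)%:E)%E.
    by move=> A mA; exact: lawX.
  rewrite /K (eq_integral (fun x => ((f x * f x)%:E * (Rd x)%:E)%E)); last first.
    by move=> x _; rewrite EFinM.
  rewrite (@dens_change R d X _ mu Rd mRd Rd0 hdist); first last.
  - by apply/measurable_EFinP; exact: measurable_funM.
  - by move=> x; rewrite lee_fin -expr2 sqr_ge0.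
  rewrite ge0_integral_distribution //.
  - by apply/measurable_EFinP; exact: measurable_funM.
  - by move=> x; rewrite lee_fin -expr2 sqr_ge0.
pose T := fun w => test_stat P Q (fun i => Xs i w).
have nT : nice T by apply: niceZ; exact: nice_sum.
rewrite /variance unlock unlock -/T.
have Ec : fine (\int[Pr]_w (T w)%:E)%E = Rintegral Pr setT T by rewrite (niceE Pr nT).
rewrite Ec.
have nTc := niceB nT (nice_cst (Rintegral Pr setT T)).
rewrite [X in (X <= _)%E](_ : _ = (Rintegral Pr setT (fun w => (T w - Rintegral Pr setT T) * (T w - Rintegral Pr setT T)))%:E);
  last by rewrite -(niceE Pr (niceM nTc nTc)).
pose Z := fun i w => Y i w - m i.
have nZ : forall i, nice (Z i) by move=> i; exact: (niceB (nY i) (nice_cst (m i))).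
have covE : forall i j, Rintegral Pr setT (fun w => Z i w * Z j w) = Rintegral Pr setT (fun w => Y i w * Y j w) - m i * m j.
  move=> i j; 
  have -> : (fun w => Z i w * Z j w) = (fun w => (Y i w * Y j w - m j * Y i w) + (m i * m j - m i * Y j w)).
    by apply/funext => w; rewrite /Z; ring.
  rewrite RintD; [|exact: (niceB (niceM (nY i) (nY j)) (niceZ (m j) (nY i))) | exact: (niceB (nice_cst (m i * m j)) (niceZ (m i) (nY j)))].
  rewrite RintB; [|exact: (niceM (nY i) (nY j)) | exact: (niceZ (m j) (nY i))].
  rewrite RintB; [|exact: nice_cst | exact: (niceZ (m i) (nY j))].
  rewrite RintZ; [|exact: nY]. rewrite Rint_cst. rewrite RintZ; [|exact: nY].
  have -> : Rintegral Pr setT (fun w => Y i w) = m i by [].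
  have -> : Rintegral Pr setT (fun w => Y j w) = m j by [].
  ring.
have cE : Rintegral Pr setT T = n%:R^-1 * \sum_(i < n) m i.
  by rewrite /T /test_stat (RintZ Pr _ (nice_sum _ _ nY)) (Rint_sum Pr _ _ nY).
have ptw : (fun w => (T w - Rintegral Pr setT T) * (T w - Rintegral Pr setT T)) =
    (fun w => (n%:R^-1 * n%:R^-1) * \sum_(i < n) \sum_(j < n) Z i w * Z j w).
  apply/funext => w; rewrite cE.
  have -> : T w - n%:R^-1 * \sum_(i < n) m i = n%:R^-1 * \sum_(i < n) Z i w.
    by rewrite /T /test_stat -mulrBr -sumrB.
  rewrite mulrACA; congr (_ * _).
  rewrite big_distrl /=; apply: eq_bigr => i _; rewrite big_distrr //.
have nS : forall i, nice (fun w => \sum_(j < n) Z i w * Z j w).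
  by move=> i; apply: nice_sum => j; exact: (niceM (nZ i) (nZ j)).
rewrite ptw (RintZ Pr _ (nice_sum _ _ nS)) (Rint_sum Pr _ _ nS).
pose k := fine K.
have Ek : forall i, Rintegral Pr setT (fun w => Y i w * Y i w) = k.
  by move=> i; rewrite /k -(diagE i).
have inner : forall i, Rintegral Pr setT (fun w => \sum_(j < n) Z i w * Z j w) <= k.
  move=> i; rewrite (Rint_sum Pr _ _ (fun j => niceM (nZ i) (nZ j))).
  rewrite (bigD1 i) //= big1; last first.
    by move=> j ji; rewrite covE cross ?subrr // eq_sym.
  rewrite addr0 covE Ek; have := sqr_ge0 (m i); rewrite expr2; lra.
have Ssum : \sum_(i < n) Rintegral Pr setT (fun w => \sum_(j < n) Z i w * Z j w) <= n%:R * k.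
  apply: (le_trans (ler_sum _ (fun i _ => inner i))).
  by rewrite sumr_const card_ord mulr_natl.
have Kfin : K = k%:E by rewrite /k -(diagE (Ordinal n0)).
rewrite /hellinger2.
apply: (@final_ineq R n k) => //.
- by apply: integral_ge0 => x _; rewrite lee_fin sqr_ge0.
- by apply: integral_ge0 => x _; rewrite lee_fin sqr_ge0.
- rewrite -Kfin /K.
  under eq_integral do rewrite -expr2.
  have HH := (hell_bound mu P Q Rd P0 Q0 Rd0 mP mQ mRd).
  exact: HH.
Qed.
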